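(* Let $A$ be a $d$-dimensional polystochastic matrix of order $4$. Suppose that for some tuple $\mathcal{E}\in\{1,2,3\}^d$ and some $y\in\{0,1\}^d$ the subcube $C_y$ of the partition defined by $\mathcal{E}$ satisfies $w(C_y)=0$ or $w(C_y)=2^{d-1}$. Then every line of $A$ contains at most two nonzero entries.
   Context: $A=(a_\alpha)_{\alpha\in\{0,1,2,3\}^d}$; a line is the set of indices obtained by fixing all coordinates but one; $A$ is polystochastic if it is nonnegative and every line sums to $1$. Define $p_1,p_2,p_3:\{0,1,2,3\}\to\{0,1\}$ by $p_1(0)=p_1(1)=0$, $p_1(2)=p_1(3)=1$; $p_2(0)=p_2(2)=0$, $p_2(1)=p_2(3)=1$; $p_3(0)=p_3(3)=0$, $p_3(1)=p_3(2)=1$. For $\mathcal{E}=(\varepsilon_1,\dots,\varepsilon_d)\in\{1,2,3\}^d$ and $y\in\{0,1\}^d$, the subcube $C_y$ is the submatrix of $A$ on the index set $\{\alpha: p_{\varepsilon_i}(\alpha_i)=y_i \text{ for all } i\}$ (a $d$-dimensional submatrix of order $2$). The weight $w(C)$ of a nonnegative matrix $C$ is the sum of its entries. *)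

(* Defs.v *)
From mathcomp Require Import all_boot all_order all_algebra.
Set Implicit Arguments. Unset Strict Implicit. Unset Printing Implicit Defensive.
Import Order.TTheory GRing.Theory Num.Theory.
Local Open Scope ring_scope.

Definition idx (d : nat) := {ffun 'I_d -> 'I_4}.

(* alpha with its i-th coordinate replaced by k; as k ranges over 'I_4 this
   traverses the line through alpha in direction i. *)
Definition upd (d : nat) (alpha : idx d) (i : 'I_d) (k : 'I_4) : idx d :=
  [ffun j => if j == i then k else alpha j].

Definition polystochastic (R : realFieldType) (d : nat) (A : idx d -> R) :=
  (forall alpha, 0 <= A alpha) /\
  (forall (i : 'I_d) (alpha : idx d), \sum_(k : 'I_4) A (upd alpha i k) = 1).

(* p_1, p_2, p_3 : {0,1,2,3} -> {0,1} (encoded as bool, 1 = true). *)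
Definition p (e : nat) (a : 'I_4) : bool :=
  match e, val a with
  | 1, 0 | 1, 1 => false | 1, _ => true
  | 2, 0 | 2, 2 => false | 2, _ => true
  | 3, 0 | 3, 3 => false | 3, _ => true
  | _, _ => false
  end.

Definition subcube_weight (R : realFieldType) (d : nat) (A : idx d -> R)
    (E : 'I_d -> nat) (y : 'I_d -> bool) : R :=
  \sum_(alpha : idx d | [forall i, p (E i) (alpha i) == y i]) A alpha.

(* Main.v *)
Require Import Defs.
From mathcomp Require Import all_boot all_order all_algebra.
From mathcomp Require Import lra.
Set Implicit Arguments. Unset Strict Implicit. Unset Printing Implicit Defensive.
Import Order.TTheory GRing.Theory Num.Theory.
Local Open Scope ring_scope.

Lemma updE d (a : idx d) i k j : upd a i k j = if j == i then k else a j.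
Proof. by rewrite /upd ffunE. Qed.

Lemma upd_upd d (a : idx d) i k k' : upd (upd a i k) i k' = upd a i k'.
Proof. by apply/ffunP => j; rewrite !updE; case: eqP. Qed.

Lemma upd_id d (a : idx d) i : upd a i (a i) = a.
Proof. by apply/ffunP => j; rewrite !updE; case: eqP => // ->. Qed.

Lemma sum_lines (R : realFieldType) d (i : 'I_d) (P : pred (idx d)) (F : idx d -> R) :
  (forall a k, P (upd a i k) = P a) ->
  \sum_(a | P a) F a = \sum_(b | P b && (b i == ord0)) \sum_(k : 'I_4) F (upd b i k).
Proof.
move=> HP.
rewrite (partition_big (fun a => upd a i ord0) (fun b => P b && (b i == ord0))); last first.
  by move=> a Pa; rewrite HP Pa updE eqxx.
apply: eq_bigr => b /andP [Pb /eqP bi0].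
rewrite (reindex_onto (fun k => upd b i k) (fun a => a i)); last first.
  by move=> a /andP [_ /eqP <-]; rewrite upd_upd upd_id.
apply: eq_bigl => k; rewrite HP Pb upd_upd updE eqxx /=.
have -> : upd b i ord0 = b by rewrite -bi0 upd_id.
by rewrite !eqxx.
Qed.
Lemma sum_p (R : realFieldType) e b : (1 <= e <= 3)%N ->
  \sum_(k : 'I_4) ((p e k == b)%:R : R) = 2.
Proof.
move=> He; rewrite !big_ord_recr big_ord0 /=.
case: e He => [|[|[|[|e]]]] //= _; case: b => /=; rewrite ?add0r ?addr0 //.
Qed.
Lemma card_p e b : (1 <= e <= 3)%N -> #|[set k : 'I_4 | p e k != b]| = 2%N.
Proof.
move=> He; case: e He => [|[|[|[|e]]]] //= _; case: b; rewrite cardsE -sum1_card big_mkcond !big_ord_recr big_ord0 /=; by []. Qed.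
Lemma slab_weight (R : realFieldType) d (A : idx d -> R) E (y : 'I_d -> bool) i :
 polystochastic A -> (forall j, (1 <= E j <= 3)%N) ->
 \sum_(a : idx d | [forall j, (j == i) || (p (E j) (a j) == y j)]) A a = (2 ^ (d - 1))%:R.
Proof.
move=> [A0 Aline] HE.
set S := (fun a : idx d => [forall j, (j == i) || (p (E j) (a j) == y j)]).
have HS : forall a k, S (upd a i k) = S a.
  by move=> a k; apply: eq_forallb => j; rewrite updE; case: eqP.
rewrite (sum_lines A HS) (eq_bigr (fun _ => 1)); last by move=> b _; apply: Aline.
have H2 : \sum_(a | S a) (1:R) = 4 * \sum_(b | S b && (b i == ord0)) (1 : R).
  rewrite (sum_lines (fun _ => 1) HS) big_distrr; apply: eq_bigr => b _.
  by rewrite sumr_const card_ord; exact: (esym (mulr1 _)).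
have H3 : \sum_(a | S a) (1:R) = 4 * (2^(d-1))%:R.
  rewrite big_mkcond /=.
  pose g := fun (j : 'I_d) (k : 'I_4) => (((j == i) || (p (E j) k == y j))%:R : R).
  rewrite (eq_bigr (fun a : idx d => \prod_j g j (a j))); last first.
    move=> a _; case: (boolP (S a)) => [/forallP H | /forallPn [j Hj]].
      by rewrite big1 // => j _; rewrite /g H.
    by rewrite (bigD1 j) //= /g (negbTE Hj) mul0r.
  rewrite -bigA_distr_bigA (bigD1 i) //=.
  congr (_ * _).
    by rewrite /g (eq_bigr (fun _ => 1)) ?sumr_const ?card_ord // => k _; rewrite eqxx.
  rewrite (eq_bigr (fun _ => 2)); last first.
    by move=> j Hj; rewrite /g (negbTE Hj) /= sum_p.
  rewrite prodr_const cardC1 card_ord natrX subn1 //.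
apply: (mulfI (x := 4)); first by rewrite pnatr_eq0.
by rewrite -H2 H3.
Qed.

Definition flip d (z : 'I_d -> bool) (i : 'I_d) : 'I_d -> bool :=
  fun j => if j == i then ~~ z i else z j.

Lemma w_ext (R : realFieldType) d (A : idx d -> R) E (z z' : 'I_d -> bool) :
  z =1 z' -> subcube_weight A E z = subcube_weight A E z'.
Proof.
move=> H; apply: eq_bigl => a; apply: eq_forallb => j; by rewrite H.
Qed.

Lemma w_flip (R : realFieldType) d (A : idx d -> R) E (z : 'I_d -> bool) i :
  polystochastic A -> (forall j, (1 <= E j <= 3)%N) ->
  subcube_weight A E z + subcube_weight A E (flip z i) = (2 ^ (d - 1))%:R.
Proof.
move=> HA HE; rewrite -(slab_weight z i HA HE).
rewrite (bigID (fun a : idx d => p (E i) (a i) == z i)) /=.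
congr (_ + _); apply: eq_bigl => a; apply/idP/idP.
- move=> /forallP H; apply/andP; split; last exact: H i.
  by apply/forallP => j; rewrite H orbT.
- move=> /andP [/forallP H Hi]; apply/forallP => j.
  case: (eqVneq j i) => [->//|nji]; by move: (H j); rewrite (negbTE nji).
- move=> /forallP H; apply/andP; split.
    apply/forallP => j; rewrite /flip; case: (eqVneq j i) => //= nji.
    by move: (H j); rewrite /flip (negbTE nji).
  by move: (H i); rewrite /flip eqxx; case: (p _ _); case: (z i).
- move=> /andP [/forallP H Hi]; apply/forallP => j; rewrite /flip.
  case: (eqVneq j i) => [->|nji] /=.
    by move: Hi; case: (p _ _); case: (z i).
  by move: (H j); rewrite (negbTE nji).
Qed.

Lemma w_all (R : realFieldType) d (A : idx d -> R) E (y : 'I_d -> bool) :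
  polystochastic A -> (forall j, (1 <= E j <= 3)%N) ->
  subcube_weight A E y = 0 \/ subcube_weight A E y = (2 ^ (d - 1))%:R ->
  forall z, subcube_weight A E z = 0 \/ subcube_weight A E z = (2 ^ (d - 1))%:R.
Proof.
move=> HA HE Hy z.
set M := ((2 ^ (d - 1))%:R : R).
have pres : forall z' i, subcube_weight A E z' = 0 \/ subcube_weight A E z' = M ->
    subcube_weight A E (flip z' i) = 0 \/ subcube_weight A E (flip z' i) = M.
  move=> z' i; have := w_flip z' i HA HE; rewrite -/M => H [] H'.
    by right; rewrite H' in H; lra.
  by left; rewrite H' in H; lra.
pose zk k := fun j : 'I_d => if (j < k)%N then z j else y j.
have Hk : forall k, subcube_weight A E (zk k) = 0 \/ subcube_weight A E (zk k) = M.
  elim=> [|k IH].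
    by rewrite (w_ext _ _ (z' := y)).
  case: (ltnP k d) => hk.
    pose o := Ordinal hk.
    case: (eqVneq (z o) (y o)) => Hzo.
      rewrite (w_ext _ _ (z' := zk k)) // => j; rewrite /zk ltnS leq_eqVlt.
      case: (eqVneq (val j) k) => [Hj|Hj] //=.
      have -> : j = o by apply: val_inj.
      by rewrite ltnn Hzo.
    rewrite (w_ext _ _ (z' := flip (zk k) o)); first exact: pres.
    move=> j; rewrite /zk /flip ltnS leq_eqVlt.
    case: (eqVneq j o) => [->|Hj] /=.
      by rewrite eqxx ltnn; move: Hzo; case: (z o); case: (y o).
    have -> : (nat_of_ord j == k) = false.
      by apply/negbTE; apply: contra Hj => /eqP Hj; apply/eqP; apply: val_inj.
    by [].
  rewrite (w_ext _ _ (z' := zk k)) // => j; rewrite /zk.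
  by rewrite (leq_trans (ltn_ord j) hk) (leq_trans (ltn_ord j) (leqW hk)).
rewrite (w_ext _ _ (z' := zk d)); first exact: Hk.
by move=> j; rewrite /zk ltn_ord.
Qed.

Lemma zero_in (R : realFieldType) d (A : idx d -> R) E (z : 'I_d -> bool) :
  polystochastic A -> subcube_weight A E z = 0 ->
  forall a : idx d, [forall j, p (E j) (a j) == z j] -> A a = 0.
Proof.
move=> [A0 _] Hz a Ha.
by apply: (psumr_eq0P _ Hz) => // b _; apply: A0.
Qed.

Theorem mainTheorem6 (R : realFieldType) (d : nat) (A : idx d -> R)
    (E : 'I_d -> nat) (y : 'I_d -> bool) :
  polystochastic A ->
  (forall i, (1 <= E i <= 3)%N) ->
  subcube_weight A E y = 0 \/ subcube_weight A E y = (2 ^ (d - 1))%:R ->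
  forall (i : 'I_d) (alpha : idx d),
    (#|[set k : 'I_4 | A (upd alpha i k) != (0%R : R)]| <= 2)%N.
Proof.
move=> HA HE Hy i alpha.
pose z := fun j => p (E j) (alpha j).
have [b Hb] : exists b, forall k, p (E i) k == b -> A (upd alpha i k) = 0.
  have HAz := w_flip z i HA HE.
  case: (w_all HA HE Hy z) => Hz.
    exists (z i) => k Hk; apply: (zero_in HA Hz); apply/forallP => j.
    rewrite updE; case: (eqVneq j i) => [->//|_]; by [].
  have Hf : subcube_weight A E (flip z i) = 0 by rewrite Hz in HAz; lra.
  exists (~~ z i) => k Hk; apply: (zero_in HA Hf); apply/forallP => j.
  rewrite updE /flip; case: (eqVneq j i) => [->//|_]; by [].
apply: (@leq_trans #|[set k : 'I_4 | p (E i) k != b]|); last by rewrite card_p. apply: subset_leq_card; apply/subsetP => k.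
rewrite !inE; apply: contra => /eqP Hk; by rewrite Hb ?Hk.
Qed.
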